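(* Let $K$ be a nonempty, compact and convex subset of a real Hausdorff locally convex topological vector space $X$, let $Y$ be an arbitrary nonempty set and let $U\subseteq K$ be dense in $K$. Let $f:K\times Y\to\mathbb R$ satisfy: (i) for every $y\in Y$ the map $x\mapsto f(x,y)$ is convex on $K$; (ii) $f$ is concavelike on $Y$, i.e. for all $y_1,y_2\in Y$, $t\in[0,1]$ there exists $y_3\in Y$ with $f(x,y_3)\ge(1-t)f(x,y_1)+tf(x,y_2)$ for all $x\in K$; (iii) the family $(f(\cdot,y))_{y\in Y}$ is an equicontinuous family in $C(K)$; (iv) $\sup_{y\in Y}f(x,y)<\infty$ for every $x\in K$. Then $$\inf_{x\in U}\sup_{y\in Y}f(x,y)=\sup_{y\in Y}\inf_{x\in U}f(x,y).$$
   Context: $C(K)$ is the set of continuous real-valued functions on $K$. A family $S\subseteq C(K)$ is equicontinuous if for every $x\in K$ and $\varepsilon>0$ there is a neighborhood $U_x$ of $x$ such that $|h(z)-h(x)|<\varepsilon$ for all $z\in U_x\cap K$ and all $h\in S$. *)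

(* Defs.v *)
From Stdlib Require Import Reals List ClassicalEpsilon.
Open Scope R_scope.

Record LCTVS := {
  pt :> Type;
  vadd : pt -> pt -> pt;
  vscal : R -> pt -> pt;
  vzero : pt;
  vopp : pt -> pt;
  vadd_assoc : forall x y z, vadd x (vadd y z) = vadd (vadd x y) z;
  vadd_comm : forall x y, vadd x y = vadd y x;
  vadd_zero : forall x, vadd x vzero = x;
  vadd_opp : forall x, vadd x (vopp x) = vzero;
  vscal_one : forall x, vscal 1 x = x;
  vscal_assoc : forall a b x, vscal a (vscal b x) = vscal (a * b) x;
  vscal_distr_v : forall a x y, vscal a (vadd x y) = vadd (vscal a x) (vscal a y);
  vscal_distr_s : forall a b x, vscal (a + b) x = vadd (vscal a x) (vscal b x);
  is_open : (pt -> Prop) -> Prop;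
  open_full : is_open (fun _ => True);
  open_inter : forall A B, is_open A -> is_open B -> is_open (fun x => A x /\ B x);
  open_union : forall (I : Type) (F : I -> pt -> Prop),
      (forall i, is_open (F i)) -> is_open (fun x => exists i, F i x);
  vadd_cont : forall x y W, is_open W -> W (vadd x y) ->
      exists A B, is_open A /\ is_open B /\ A x /\ B y /\
        (forall u v, A u -> B v -> W (vadd u v));
  vscal_cont : forall a x W, is_open W -> W (vscal a x) ->
      exists d A, d > 0 /\ is_open A /\ A x /\
        (forall b u, Rabs (b - a) < d -> A u -> W (vscal b u));
  hausdorff : forall x y, x <> y ->
      exists A B, is_open A /\ is_open B /\ A x /\ B y /\
        (forall z, ~ (A z /\ B z));
  loc_convex : forall W, is_open W -> W vzero ->
      exists V, is_open V /\ V vzero /\ (forall z, V z -> W z) /\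
        (forall u v t, V u -> V v -> 0 <= t <= 1 ->
           V (vadd (vscal (1 - t) u) (vscal t v)))
}.

Arguments vadd {_}. Arguments vscal {_}. Arguments is_open {_}.

Section Notions.
Context {X : LCTVS}.

Definition convex_set (K : X -> Prop) : Prop :=
  forall x y t, K x -> K y -> 0 <= t <= 1 ->
    K (vadd (vscal (1 - t) x) (vscal t y)).

Definition compact_set (K : X -> Prop) : Prop :=
  forall (I : Type) (F : I -> X -> Prop), (forall i, is_open (F i)) ->
    (forall x, K x -> exists i, F i x) ->
    exists l : list I, forall x, K x -> exists i, In i l /\ F i x.

Definition dense_in (U K : X -> Prop) : Prop :=
  (forall x, U x -> K x) /\
  (forall W, is_open W -> (exists x, K x /\ W x) -> exists u, U u /\ W u).

Definition convex_on (K : X -> Prop) (g : X -> R) : Prop :=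
  forall x y t, K x -> K y -> 0 <= t <= 1 ->
    g (vadd (vscal (1 - t) x) (vscal t y)) <= (1 - t) * g x + t * g y.

Definition equicontinuous_on {Y : Type} (K : X -> Prop) (f : X -> Y -> R) : Prop :=
  forall x eps, K x -> eps > 0 ->
    exists V, is_open V /\ V x /\
      forall z y, V z -> K z -> Rabs (f z y - f x y) < eps.

End Notions.

Inductive ER := Fin (r : R) | PInf | MInf.

Definition ERle (a b : ER) : Prop :=
  match a, b with
  | MInf, _ => True
  | _, PInf => True
  | Fin x, Fin y => x <= y
  | _, _ => False
  end.

Definition is_ER_lub (S : ER -> Prop) (v : ER) : Prop :=
  (forall w, S w -> ERle w v) /\ (forall u, (forall w, S w -> ERle w u) -> ERle v u).
Definition is_ER_glb (S : ER -> Prop) (v : ER) : Prop :=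
  (forall w, S w -> ERle v w) /\ (forall u, (forall w, S w -> ERle u w) -> ERle u v).

(* The (unique, existing) least upper / greatest lower bound in [-oo,+oo]. *)
Definition ERsup (S : ER -> Prop) : ER := epsilon (inhabits PInf) (is_ER_lub S).
Definition ERinf (S : ER -> Prop) : ER := epsilon (inhabits PInf) (is_ER_glb S).

(* Main.v *)
Require Import Defs.
From Stdlib Require Import Reals List ClassicalEpsilon Lra Classical.
Open Scope R_scope.

Lemma ERle_trans a b c : ERle a b -> ERle b c -> ERle a c.
Proof. destruct a, b, c; simpl; intros; try lra; tauto. Qed.

Lemma ERle_antisym a b : ERle a b -> ERle b a -> a = b.
Proof. destruct a, b; simpl; intros; try tauto; f_equal; lra. Qed.

Lemma ER_lub_ex (S : ER -> Prop) : exists v, is_ER_lub S v.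
Proof.
  destruct (classic (S PInf)) as [HP|HP].
  { exists PInf; split; [intros w _; destruct w; exact I | intros u Hu; apply Hu; auto]. }
  destruct (classic (exists M, forall r, S (Fin r) -> r <= M)) as [[M HM]|HnB].
  - destruct (classic (exists r, S (Fin r))) as [[r0 Hr0]|Hne].
    + destruct (completeness (fun r => S (Fin r))) as [m [Hub Hl]].
      { exists M; intros r Hr; auto. }
      { exists r0; auto. }
      exists (Fin m); split.
      * intros w Hw; destruct w; simpl; [apply Hub; auto | contradiction | exact I].
      * intros u Hu; destruct u; simpl.
        -- apply Hl; intros x Hx; exact (Hu _ Hx).
        -- exact I.
        -- exact (Hu _ Hr0).
    + exists MInf; split.
      * intros w Hw; destruct w; [exfalso; apply Hne; eauto | contradiction | exact I].
      * intros; exact I.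
  - exists PInf; split; [intros w _; destruct w; exact I|].
    intros u Hu; destruct u; simpl.
    + apply HnB; exists r; intros r' Hr'; exact (Hu _ Hr').
    + exact I.
    + apply HnB; exists 0; intros r' Hr'; specialize (Hu _ Hr'); simpl in Hu; contradiction.
Qed.

Definition ERneg (a : ER) : ER := match a with Fin r => Fin (- r) | PInf => MInf | MInf => PInf end.
Lemma ERneg_inv a : ERneg (ERneg a) = a.
Proof. destruct a; simpl; auto; f_equal; ring. Qed.
Lemma ERle_neg a b : ERle a b -> ERle (ERneg b) (ERneg a).
Proof. destruct a, b; simpl; intros; try lra; tauto. Qed.

Lemma ER_glb_ex (S : ER -> Prop) : exists v, is_ER_glb S v.
Proof.
  destruct (ER_lub_ex (fun w => S (ERneg w))) as [v [H1 H2]].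
  exists (ERneg v); split.
  - intros w Hw. rewrite <- (ERneg_inv w). apply ERle_neg, H1. rewrite ERneg_inv; auto.
  - intros u Hu. rewrite <- (ERneg_inv u). apply ERle_neg, H2.
    intros w Hw. rewrite <- (ERneg_inv w). apply ERle_neg, Hu; auto.
Qed.

Lemma ERsup_spec S : is_ER_lub S (ERsup S).
Proof. unfold ERsup. apply epsilon_spec, ER_lub_ex. Qed.
Lemma ERinf_spec S : is_ER_glb S (ERinf S).
Proof. unfold ERinf. apply epsilon_spec, ER_glb_ex. Qed.

Lemma div_le_div a b c d : b > 0 -> d > 0 -> a * d <= c * b -> a / b <= c / d.
Proof.
  intros Hb Hd H.
  assert (E1 : a / b = (a * d) * / (b * d)) by (field; split; lra).
  assert (E2 : c / d = (c * b) * / (b * d)) by (field; split; lra).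
  rewrite E1, E2. apply Rmult_le_compat_r; [left; apply Rinv_0_lt_compat; nra | exact H].
Qed.

Lemma div01 a b : 0 <= a <= b -> b > 0 -> 0 <= a / b <= 1.
Proof.
  intros Ha Hb. unfold Rdiv. split.
  - apply Rmult_le_pos; [lra | left; apply Rinv_0_lt_compat; lra].
  - apply (Rmult_le_reg_r b); [lra|]. rewrite Rmult_assoc, Rinv_l; lra.
Qed.

Section Two.
Context {X : LCTVS}.

Lemma cross (C : X -> Prop) (P Q : X -> R) :
  convex_set C -> convex_on C P -> convex_on C Q ->
  (forall x, C x -> P x >= 0 \/ Q x >= 0) ->
  forall x x', C x -> C x' -> P x < 0 -> Q x' < 0 -> (- P x) * (- Q x') <= P x' * Q x.
Proof.
  intros HC HP HQ Hh x x' Cx Cx' Px Qx'.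
  assert (Qx : Q x >= 0) by (destruct (Hh x Cx); lra).
  assert (Px' : P x' >= 0) by (destruct (Hh x' Cx'); lra).
  apply Rnot_lt_le; intro Hc.
  set (a0 := P x) in *. set (a1 := P x') in *. set (b0 := Q x) in *. set (b1 := Q x') in *.
  set (sa := - a0 / (a1 - a0)).
  assert (e1 : sa * (a1 - a0) = - a0) by (unfold sa; field; lra).
  set (sb := b0 / (b0 - b1)).
  assert (e2 : sb * (b0 - b1) = b0) by (unfold sb; field; lra).
  assert (Hsa : 0 < sa <= 1) by (split; nra).
  assert (Hsb : 0 <= sb < 1) by (split; nra).
  assert (E : (sa - sb) * ((a1 - a0) * (b0 - b1)) = - a0 * (b0 - b1) - b0 * (a1 - a0)).
  { transitivity (sa * (a1 - a0) * (b0 - b1) - sb * (b0 - b1) * (a1 - a0)); [ring|].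
    rewrite e1, e2; ring. }
  assert (Hd : 0 < sa - sb).
  { apply (Rmult_lt_reg_r ((a1 - a0) * (b0 - b1))); [apply Rmult_lt_0_compat; lra|].
    rewrite Rmult_0_l, E. nra. }
  set (s := (sa + sb) / 2).
  assert (Hs : 0 <= s <= 1) by (unfold s; lra).
  pose (z := vadd (vscal (1 - s) x) (vscal s x')).
  assert (Cz : C z) by (apply HC; auto).
  assert (Pz := HP x x' s Cx Cx' Hs). assert (Qz := HQ x x' s Cx Cx' Hs).
  fold z in Pz, Qz.
  assert (h1 : s * (a1 - a0) < sa * (a1 - a0)) by (apply Rmult_lt_compat_r; unfold s; lra).
  assert (h2 : sb * (b0 - b1) < s * (b0 - b1)) by (apply Rmult_lt_compat_r; unfold s; lra).
  destruct (Hh z Cz); fold a0 a1 b0 b1 in Pz, Qz; nra.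
Qed.

Lemma two_fun (C : X -> Prop) (P Q : X -> R) :
  convex_set C -> convex_on C P -> convex_on C Q ->
  (forall x, C x -> P x >= 0 \/ Q x >= 0) ->
  exists l, 0 <= l <= 1 /\ forall x, C x -> (1 - l) * P x + l * Q x >= 0.
Proof.
  intros HC HP HQ Hh.
  pose proof (cross C P Q HC HP HQ Hh) as Cr.
  destruct (classic (forall x, C x -> P x >= 0)) as [HP0|HP0].
  { exists 0; split; [lra|]. intros x Cx; specialize (HP0 x Cx); lra. }
  destruct (classic (forall x, C x -> Q x >= 0)) as [HQ0|HQ0].
  { exists 1; split; [lra|]. intros x Cx; specialize (HQ0 x Cx); lra. }
  destruct (not_all_ex_not _ _ HP0) as [x1 H1]. apply imply_to_and in H1. destruct H1 as [C1 P1].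
  apply Rnot_ge_lt in P1.
  destruct (not_all_ex_not _ _ HQ0) as [x2 H2]. apply imply_to_and in H2. destruct H2 as [C2 Q2].
  apply Rnot_ge_lt in Q2.
  assert (Qpos : forall x, C x -> P x < 0 -> Q x > 0).
  { intros x Cx Px. specialize (Cr x x2 Cx C2 Px Q2).
    assert (Qx : 0 <= Q x) by (destruct (Hh x Cx); lra).
    assert (P2 : 0 <= P x2) by (destruct (Hh x2 C2); lra).
    destruct (Rle_lt_or_eq_dec _ _ Qx) as [h|h]; [lra|].
    rewrite <- h in Cr. nra. }
  assert (Ppos : forall x, C x -> Q x < 0 -> P x > 0).
  { intros x Cx Qx. specialize (Cr x1 x C1 Cx P1 Qx).
    assert (Px : 0 <= P x) by (destruct (Hh x Cx); lra).
    assert (Q1 : 0 <= Q x1) by (destruct (Hh x1 C1); lra).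
    destruct (Rle_lt_or_eq_dec _ _ Px) as [h|h]; [lra|].
    rewrite <- h in Cr. nra. }
  set (E := fun r => exists x, C x /\ P x < 0 /\ r = - P x / Q x).
  assert (Hb : forall x', C x' -> Q x' < 0 -> is_upper_bound E (P x' / - Q x')).
  { intros x' Cx' Qx' r [x [Cx [Px ->]]]. apply div_le_div.
    - apply Qpos; auto.
    - lra.
    - specialize (Cr x x' Cx Cx' Px Qx'). lra. }
  destruct (completeness E) as [mu [Hub Hl]].
  { exists (P x2 / - Q x2); apply Hb; auto. }
  { exists (- P x1 / Q x1); exists x1; auto. }
  assert (Hmu : 0 < mu).
  { apply Rlt_le_trans with (- P x1 / Q x1).
    - apply Rdiv_lt_0_compat; [lra | apply Qpos; auto].
    - apply Hub; exists x1; auto. }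
  exists (mu / (1 + mu)). split; [apply div01; lra|].
  intros x Cx.
  assert (Key : P x + mu * Q x >= 0).
  { destruct (Rlt_or_le (P x) 0) as [Px|Px].
    - assert (Qx := Qpos x Cx Px).
      assert (r1 : - P x / Q x <= mu) by (apply Hub; exists x; auto).
      assert (r2 : (- P x / Q x) * Q x = - P x) by (field; lra).
      assert (r3 : (- P x / Q x) * Q x <= mu * Q x) by (apply Rmult_le_compat_r; lra).
      lra.
    - destruct (Rlt_or_le (Q x) 0) as [Qx|Qx].
      + assert (r1 : mu <= P x / - Q x) by (apply Hl, Hb; auto).
        assert (r2 : (P x / - Q x) * (- Q x) = P x) by (field; lra).
        assert (r3 : mu * (- Q x) <= (P x / - Q x) * (- Q x)) by (apply Rmult_le_compat_r; lra).
        lra.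
      + assert (0 <= mu * Q x) by (apply Rmult_le_pos; lra). lra. }
  assert (Eq : (1 - mu / (1 + mu)) * P x + mu / (1 + mu) * Q x = (P x + mu * Q x) * / (1 + mu))
    by (field; lra).
  rewrite Eq. apply Rle_ge, Rmult_le_pos; [lra | left; apply Rinv_0_lt_compat; lra].
Qed.

End Two.

Lemma finite_step (X : LCTVS) (K : X -> Prop) (Y : Type) (f : X -> Y -> R)
  (hYne : inhabited Y)
  (hconv : forall y, convex_on K (fun x => f x y))
  (hconc : forall y1 y2 t, 0 <= t <= 1 -> exists y3, forall x, K x ->
      f x y3 >= (1 - t) * f x y1 + t * f x y2)
  (b : R) (l : list Y) :
  forall C : X -> Prop, (forall x, C x -> K x) -> convex_set C ->
  (forall x, C x -> exists y, In y l /\ f x y >= b) ->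
  exists y0, forall x, C x -> f x y0 >= b.
Proof.
  induction l as [|a l IH]; intros C CK HC H.
  - destruct hYne as [y0]. exists y0. intros x Cx. destruct (H x Cx) as [y [[] _]].
  - destruct (IH (fun x => C x /\ f x a < b)) as [y' Hy'].
    + intros x [Cx _]; auto.
    + intros x z t [Cx Fx] [Cz Fz] Ht. split; [apply HC; auto|].
      pose proof (hconv a x z t (CK x Cx) (CK z Cz) Ht) as Hc. simpl in Hc.
      destruct (Rlt_or_le 0 t); nra.
    + intros x [Cx Fx]. destruct (H x Cx) as [y [[<-|Iy] Fy]]; [lra|eauto].
    + destruct (two_fun C (fun x => f x y' - b) (fun x => f x a - b) HC) as [lam [Hl Hlam]].
      * intros x z t Cx Cz Ht. pose proof (hconv y' x z t (CK x Cx) (CK z Cz) Ht). simpl in *. lra.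
      * intros x z t Cx Cz Ht. pose proof (hconv a x z t (CK x Cx) (CK z Cz) Ht). simpl in *. lra.
      * intros x Cx. destruct (Rlt_or_le (f x a) b) as [h|h].
        -- left. specialize (Hy' x (conj Cx h)). lra.
        -- right; lra.
      * destruct (hconc y' a lam Hl) as [y3 H3]. exists y3. intros x Cx.
        specialize (H3 x (CK x Cx)). specialize (Hlam x Cx). simpl in Hlam. lra.
Qed.

Lemma finish (L Rr : ER) :
  (forall b b', b < b' -> ERle (Fin b') L -> ERle (Fin b) Rr) -> ERle L Rr.
Proof.
  intros H. destruct L as [l| |], Rr as [r| |]; simpl; auto.
  - apply Rnot_lt_le; intro h. specialize (H ((r + l) / 2) l ltac:(lra) ltac:(simpl; lra)).
    simpl in H; lra.
  - apply (H (l - 1) l ltac:(lra)); simpl; lra.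
  - specialize (H (r + 1) (r + 2) ltac:(lra) I); simpl in H; lra.
  - apply (H 0 1 ltac:(lra)); simpl; auto.
Qed.

Theorem mainTheorem15 (X : LCTVS) (K U : X -> Prop) (Y : Type) (f : X -> Y -> R)
  (hKne : exists x, K x) (hKc : compact_set K) (hKcv : convex_set K)
  (hYne : inhabited Y) (hU : dense_in U K)
  (hconv : forall y, convex_on K (fun x => f x y))
  (hconc : forall y1 y2 t, 0 <= t <= 1 -> exists y3, forall x, K x ->
      f x y3 >= (1 - t) * f x y1 + t * f x y2)
  (heq : equicontinuous_on K f)
  (hbd : forall x, K x -> exists M, forall y, f x y <= M) :
  ERinf (fun v => exists x, U x /\ v = ERsup (fun w => exists y, w = Fin (f x y)))
  = ERsup (fun v => exists y, v = ERinf (fun w => exists x, U x /\ w = Fin (f x y))).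
Proof.
  set (L := ERinf _). set (Rr := ERsup _).
  assert (HL : is_ER_glb (fun v => exists x, U x /\ v = ERsup (fun w => exists y, w = Fin (f x y))) L)
    by apply ERinf_spec.
  assert (HR : is_ER_lub (fun v => exists y, v = ERinf (fun w => exists x, U x /\ w = Fin (f x y))) Rr)
    by apply ERsup_spec.
  destruct hU as [UK Hd].
  apply ERle_antisym.
  - apply finish. intros b b' Hbb HbL.
    set (g := (b + b') / 2).
    assert (hU1 : forall u, U u -> exists y, f u y > g).
    { intros u Uu. apply NNPP; intro Hn.
      assert (Hs : ERle (ERsup (fun w => exists y, w = Fin (f u y))) (Fin g)).
      { apply (proj2 (ERsup_spec _)). intros w [y ->]. simpl.
        apply Rnot_lt_le; intro h; apply Hn; exists y; lra. }
      assert (Hl : ERle L (ERsup (fun w => exists y, w = Fin (f u y))))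
        by (apply (proj1 HL); exists u; auto).
      pose proof (ERle_trans _ _ _ (ERle_trans _ _ _ HbL Hl) Hs) as Hc. simpl in Hc.
      unfold g in Hc; lra. }
    assert (hK1 : forall x, K x -> exists y, f x y > b).
    { intros x Kx. destruct (heq x (g - b) Kx ltac:(unfold g; lra)) as [V [Vo [Vx HV]]].
      destruct (Hd V Vo (ex_intro _ x (conj Kx Vx))) as [u [Uu Vu]].
      destruct (hU1 u Uu) as [y Hy]. exists y.
      pose proof (Rabs_def2 _ _ (HV u y Vu (UK u Uu))). lra. }
    set (Idx := {p : Y * (X -> Prop) | is_open (snd p) /\
                 forall z, snd p z -> K z -> f z (fst p) > b}).
    destruct (hKc Idx (fun i => snd (proj1_sig i))) as [l Hl].
    { intros i; exact (proj1 (proj2_sig i)). }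
    { intros x Kx. destruct (hK1 x Kx) as [y Hy].
      destruct (heq x (f x y - b) Kx ltac:(lra)) as [V [Vo [Vx HV]]].
      assert (HP : is_open (snd (y, V)) /\ forall z, snd (y, V) z -> K z -> f z (fst (y, V)) > b).
      { split; [exact Vo|]. simpl. intros z Vz Kz.
        pose proof (Rabs_def2 _ _ (HV z y Vz Kz)). lra. }
      exists (exist _ (y, V) HP). exact Vx. }
    destruct (finite_step X K Y f hYne hconv hconc b (map (fun i => fst (proj1_sig i)) l) K
               (fun x h => h) hKcv) as [y0 Hy0].
    { intros x Kx. destruct (Hl x Kx) as [i [Ii Fi]]. exists (fst (proj1_sig i)). split.
      - exact (in_map (fun i : Idx => fst (proj1_sig i)) l i Ii).
      - apply Rgt_ge, (proj2 (proj2_sig i)); auto. }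
    apply ERle_trans with (ERinf (fun w => exists x, U x /\ w = Fin (f x y0))).
    + apply (proj2 (ERinf_spec _)). intros w [x [Ux ->]]. simpl.
      apply Rge_le, Hy0, UK; auto.
    + apply (proj1 HR). exists y0; auto.
  - apply (proj2 HR). intros w [y ->]. apply (proj2 HL). intros v [x [Ux ->]].
    apply ERle_trans with (Fin (f x y)).
    + apply (proj1 (ERinf_spec _)). exists x; auto.
    + apply (proj1 (ERsup_spec _)). exists y; auto.
Qed.
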